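(* In the two-SP bandwidth game with minimum small-cell bandwidth constraints, suppose exactly SP 2's constraint is violated by the unconstrained equilibrium, i.e. $B_{1,S}^{\mathrm{free}}\ge B_{1,S}^0$ and $B_{2,S}^{\mathrm{free}}<B_{2,S}^0$. Then the unique constrained Nash equilibrium $(B_{1,S}^*,B_{2,S}^* )$ satisfies $B_{2,S}^*=B_{2,S}^0$; that is, it is of one of the two types: (I) $B_{1,S}^*=B_{1,S}^0,\ B_{2,S}^*=B_{2,S}^0$; or (II) $B_{1,S}^*>B_{1,S}^0,\ B_{2,S}^*=B_{2,S}^0$. In particular, an equilibrium with $B_{1,S}^*=B_{1,S}^0$ and $B_{2,S}^*>B_{2,S}^0$ is impossible.
   Context: Fixed parameters: $\alpha\in(0,1)$; densities $N_m>0$ (mobile users) and $N_f>0$ (fixed users); spectral efficiency $R_0>0$; common small-cell density $\lambda_S>1$ (macro density normalized to 1); total bandwidths $B_1,B_2>0$; regulatory lower bounds $B_{i,S}^0\in[0,B_i]$. Utility $u(r)=\frac{r^{1-\alpha}}{1-\alpha}$, $u'(r)=r^{-\alpha}$. Let $\epsilon=\lambda_S^{1/\alpha-1}$. Two-SP bandwidth game: SP $i\in\{1,2\}$ chooses small-cell bandwidth $B_{i,S}\in[B_{i,S}^0,B_i]$ and sets $B_{i,M}=B_i-B_{i,S}$. Given a profile, prices are market-clearing, mobile users use macro-cells and fixed users use small-cells, so the average rates are $R_S=\frac{\lambda_S(B_{1,S}+B_{2,S})R_0}{N_f}$ and $R_M=\frac{(B_{1,M}+B_{2,M})R_0}{N_m}$,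 and SP $i$'s payoff (revenue) is $S_i=R_0B_{i,M}R_M^{-\alpha}+R_0\lambda_SB_{i,S}R_S^{-\alpha}$ (a term with zero bandwidth is $0$). This game has a unique pure Nash equilibrium. Define $B_{i,S}^{\mathrm{free}}=\frac{\epsilon N_fB_i}{\epsilon N_f+N_m}$, the equilibrium small-cell bandwidth of SP $i$ when there are no constraints ($B_{i,S}^0=0$). *)

(* Defs.v *)
From Stdlib Require Import Reals Lra.
Open Scope R_scope.

(* u'(r) = r^(-alpha); a revenue term R0 * B * (lambda) * r^(-alpha),
   which is 0 when the bandwidth B is 0 (B <= 0 never occurs otherwise). *)
Definition rev_term (alpha R0 lam B r : R) : R :=
  if Rle_dec B 0 then 0 else R0 * lam * B * Rpower r (- alpha).

Definition rate_S (Nf R0 lamS b1 b2 : R) : R := lamS * (b1 + b2) * R0 / Nf.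
Definition rate_M (Nm R0 B1 B2 b1 b2 : R) : R := ((B1 - b1) + (B2 - b2)) * R0 / Nm.

Definition payoff (alpha Nm Nf R0 lamS B1 B2 Bi bi b1 b2 : R) : R :=
  rev_term alpha R0 1 (Bi - bi) (rate_M Nm R0 B1 B2 b1 b2)
  + rev_term alpha R0 lamS bi (rate_S Nf R0 lamS b1 b2).

Definition S1 alpha Nm Nf R0 lamS B1 B2 b1 b2 :=
  payoff alpha Nm Nf R0 lamS B1 B2 B1 b1 b1 b2.
Definition S2 alpha Nm Nf R0 lamS B1 B2 b1 b2 :=
  payoff alpha Nm Nf R0 lamS B1 B2 B2 b2 b1 b2.

Definition is_NE alpha Nm Nf R0 lamS B1 B2 B10 B20 (b1 b2 : R) : Prop :=
  B10 <= b1 <= B1 /\ B20 <= b2 <= B2 /\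
  (forall x, B10 <= x <= B1 ->
     S1 alpha Nm Nf R0 lamS B1 B2 x b2 <= S1 alpha Nm Nf R0 lamS B1 B2 b1 b2) /\
  (forall x, B20 <= x <= B2 ->
     S2 alpha Nm Nf R0 lamS B1 B2 b1 x <= S2 alpha Nm Nf R0 lamS B1 B2 b1 b2).

Definition eps_of (alpha lamS : R) : R := Rpower lamS (1 / alpha - 1).

Definition B_free (alpha Nm Nf lamS Bi : R) : R :=
  eps_of alpha lamS * Nf * Bi / (eps_of alpha lamS * Nf + Nm).

(* Main.v *)
Require Import Defs.
From Stdlib Require Import Reals Lra.
From Coquelicot Require Import Coquelicot.
Open Scope R_scope.
Definition G (a R0 Nm Nf lamS K M N x : R) : R :=
  R0 * 1 * (K - x) * Rpower ((M - x) * R0 / Nm) (- a)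
  + R0 * lamS * x * Rpower (lamS * (N + x) * R0 / Nf) (- a).
Lemma G_deriv a R0 Nm Nf lamS K M N c :
  0 < R0 -> 0 < Nm -> 0 < Nf -> 0 < lamS -> 0 < M - c -> 0 < N + c ->
  derivable_pt_lim (G a R0 Nm Nf lamS K M N) c
   (R0 * (lamS * Rpower (lamS * (N + c) * R0 / Nf) (- a) * (1 - a * c / (N + c))
          - Rpower ((M - c) * R0 / Nm) (- a) * (1 - a * (K - c) / (M - c)))).
Proof.
  intros. apply is_derive_Reals. unfold G, Rpower.
  auto_derive.
  - split. apply Rdiv_lt_0_compat; [nra|lra]. split; auto.
    apply Rdiv_lt_0_compat; [|lra]. apply Rmult_lt_0_compat; nra.
  - set (rM := (M - c) * R0 / Nm). set (rS := lamS * (N + c) * R0 / Nf).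
    replace ((M + - c) * R0 * / Nm) with rM by (unfold rM; field; lra).
    replace (lamS * (N + c) * R0 * / Nf) with rS by (unfold rS; field; lra).
    unfold rM, rS. field. repeat split; lra.
Qed.
Lemma deriv_neg_left f c d lo : derivable_pt_lim f c d -> d < 0 -> lo < c ->
  exists x, lo < x < c /\ f c < f x.
Proof.
  intros Hd Hneg Hlo.
  destruct (Hd (- d / 2)) as [del Hdel]; [lra|].
  set (h := - Rmin (del / 2) ((c - lo) / 2)).
  assert (Hm1 : Rmin (del/2) ((c-lo)/2) <= del/2) by apply Rmin_l.
  assert (Hm2 : Rmin (del/2) ((c-lo)/2) <= (c-lo)/2) by apply Rmin_r.
  assert (Hm3 : 0 < Rmin (del/2) ((c-lo)/2)).
  { apply Rmin_glb_lt; pose proof (cond_pos del); lra. }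
  pose proof (cond_pos del).
  assert (Hh : h <> 0) by (unfold h; lra).
  assert (Ha : Rabs h < del) by (unfold h; rewrite Rabs_Ropp, Rabs_pos_eq; lra).
  specialize (Hdel h Hh Ha).
  exists (c + h). split; [unfold h; lra|].
  set (Q := (f (c + h) - f c) / h) in Hdel.
  assert (HQ : Q < d / 2) by (apply Rabs_def2 in Hdel; lra).
  assert (E : f (c + h) - f c = Q * h) by (unfold Q; field; auto).
  assert (h < 0) by (unfold h; lra). nra.
Qed.
Lemma deriv_pos_right f c d hi : derivable_pt_lim f c d -> 0 < d -> c < hi ->
  exists x, c < x < hi /\ f c < f x.
Proof.
  intros Hd Hneg Hlo.
  destruct (Hd (d / 2)) as [del Hdel]; [lra|].
  set (h := Rmin (del / 2) ((hi - c) / 2)).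
  assert (Hm1 : Rmin (del/2) ((hi-c)/2) <= del/2) by apply Rmin_l.
  assert (Hm2 : Rmin (del/2) ((hi-c)/2) <= (hi-c)/2) by apply Rmin_r.
  assert (Hm3 : 0 < Rmin (del/2) ((hi-c)/2)).
  { apply Rmin_glb_lt; pose proof (cond_pos del); lra. }
  pose proof (cond_pos del).
  assert (Hh : h <> 0) by (unfold h; lra).
  assert (Ha : Rabs h < del) by (unfold h; rewrite Rabs_pos_eq; lra).
  specialize (Hdel h Hh Ha).
  exists (c + h). split; [unfold h; lra|].
  set (Q := (f (c + h) - f c) / h) in Hdel.
  assert (HQ : d / 2 < Q) by (apply Rabs_def2 in Hdel; lra).
  assert (E : f (c + h) - f c = Q * h) by (unfold Q; field; auto).
  assert (0 < h) by (unfold h; lra). nra.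
Qed.
Lemma alg a q p X Y b1 b2 B1 B2 E Nm B10 :
  0 < a < 1 -> 0 < q -> 0 < p -> 0 < E -> 0 < Nm -> 0 < B1 -> 0 < B2 ->
  X = b1 + b2 -> Y = B1 - b1 + B2 - b2 -> 0 < X -> 0 < Y ->
  0 <= b1 -> 0 <= b2 ->
  (q < p <-> E * Y < X * Nm) -> (p < q <-> X * Nm < E * Y) ->
  q * (X - a * b2) * Y - p * (Y - a * (B2 - b2)) * X >= 0 ->
  (b1 < B1 -> q * (X - a * b1) * Y - p * (Y - a * (B1 - b1)) * X <= 0) ->
  (B10 < b1 -> q * (X - a * b1) * Y - p * (Y - a * (B1 - b1)) * X >= 0) ->
  B10 * (E + Nm) <= E * B1 -> E * B2 < b2 * (E + Nm) -> B10 <= b1 <= B1 -> b2 <= B2 ->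
  False.
Proof.
  intros Ha Hq Hp HE HNm HB1 HB2 HX HY HX0 HY0 Hb1 Hb2 C1 C2 G2 G1a G1b F1 F2 R1 R2.
  assert (Xb1 : 0 < X - a * b1) by nra.
  assert (Xb2 : 0 < X - a * b2) by nra.
  assert (EN : 0 < E + Nm) by lra.
  destruct (Rlt_or_le (X * Nm) (E * Y)) as [Hc|Hc].
  - apply C2 in Hc as Hqp.
    assert (K1 : X * B2 < b2 * (X + Y)).
    { assert (X * (E + Nm) * B2 < b2 * (E + Nm) * (X + Y)).
      { apply Rlt_le_trans with (E * (X + Y) * B2). apply Rmult_lt_compat_r; lra.
        assert (E * B2 * (X + Y) <= b2 * (E + Nm) * (X + Y)) by (apply Rmult_le_compat_r; lra). lra. }
      apply Rmult_lt_reg_r with (E + Nm); lra. }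
    assert (K2 : b1 * (X + Y) < B1 * X) by nra.
    assert (K3 : b1 < B1) by nra.
    specialize (G1a K3).
    assert (E1 : q * (X - a * b1) * Y - p * (Y - a * (B1 - b1)) * X =
       (q - p) * (X - a * b1) * Y + p * a * (B1 * X - b1 * (X + Y))) by (subst; ring).
    assert (0 < (q - p) * (X - a * b1) * Y).
    { apply Rmult_lt_0_compat; [apply Rmult_lt_0_compat|]; lra. }
    assert (0 < p * a * (B1 * X - b1 * (X + Y))).
    { apply Rmult_lt_0_compat; [apply Rmult_lt_0_compat|]; lra. }
    lra.
  - assert (Hqp : q <= p).
    { destruct (Rlt_or_le p q) as [h|h]; auto. apply C2 in h. lra. }
    assert (E2 : q * (X - a * b2) * Y - p * (Y - a * (B2 - b2)) * X =
       (q - p) * (X - a * b2) * Y + p * a * (B2 * X - b2 * (X + Y))) by (subst; ring).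
    assert (0 <= (p - q) * (X - a * b2) * Y).
    { apply Rmult_le_pos; [apply Rmult_le_pos|]; lra. }
    assert (K1 : 0 <= p * a * (B2 * X - b2 * (X + Y))) by lra.
    assert (K2 : 0 <= B2 * X - b2 * (X + Y)).
    { destruct (Rlt_or_le (B2 * X - b2 * (X + Y)) 0) as [h|h]; auto.
      assert (0 < p * a * (- (B2 * X - b2 * (X + Y)))).
      { apply Rmult_lt_0_compat; [apply Rmult_lt_0_compat|]; lra. } lra. }
    assert (Heq : X * Nm = E * Y).
    { destruct (Rle_lt_or_eq_dec _ _ (proj1 R1)) as [h|h].
      - specialize (G1b h).
        assert (E3 : q * (X - a * b1) * Y - p * (Y - a * (B1 - b1)) * X +
          (q * (X - a * b2) * Y - p * (Y - a * (B2 - b2)) * X) = (q - p) * ((2 - a) * X * Y))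
          by (subst; ring).
        assert (0 < (2 - a) * X * Y) by (apply Rmult_lt_0_compat; [apply Rmult_lt_0_compat|]; lra).
        assert (q >= p).
        { destruct (Rlt_or_le q p) as [h'|h']; [|lra].
          assert (0 < (p - q) * ((2 - a) * X * Y)) by (apply Rmult_lt_0_compat; lra). lra. }
        destruct (Rlt_or_le (E * Y) (X * Nm)) as [h'|h']; [apply C1 in h'; lra| lra].
      - subst B10.
        assert (B1 * X * (E + Nm) <= E * B1 * (X + Y)).
        { assert (B1 * X <= b1 * (X + Y)) by nra.
          apply Rle_trans with (b1 * (X + Y) * (E + Nm)). apply Rmult_le_compat_r; lra.
          assert (b1 * (E + Nm) * (X + Y) <= E * B1 * (X + Y)) by (apply Rmult_le_compat_r; lra).
          lra. }
        assert (X * (E + Nm) <= E * (X + Y)).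
        { apply Rmult_le_reg_l with B1; auto. lra. }
        lra. }
    assert (b2 * (X + Y) * (E + Nm) <= B2 * X * (E + Nm)) by (apply Rmult_le_compat_r; lra).
    assert (b2 * (E + Nm) * (X + Y) < E * B2 * (X + Y)) by nra.
    assert (E * B2 * (X + Y) < b2 * (E + Nm) * (X + Y)) by (apply Rmult_lt_compat_r; lra).
    lra.
Qed.
Lemma ln_cmp a u v u' v' : 0 < a -> 0 < u -> 0 < v -> 0 < u' -> 0 < v' ->
  ln u - ln v = a * (ln u' - ln v') -> (u < v <-> u' < v').
Proof.
  intros Ha Hu Hv Hu' Hv' E. split; intro H.
  - apply ln_increasing in H; auto. apply ln_lt_inv; auto. nra.
  - apply ln_increasing in H; auto. apply ln_lt_inv; auto. nra.
Qed.
Lemma cmp_prices a lamS R0 Nm Nf X Y : 0 < a -> 0 < lamS -> 0 < R0 -> 0 < Nm -> 0 < Nf ->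
  0 < X -> 0 < Y ->
  (lamS * Rpower (lamS * X * R0 / Nf) (- a) < Rpower (Y * R0 / Nm) (- a) <->
   eps_of a lamS * Nf * Y < X * Nm) /\
  (Rpower (Y * R0 / Nm) (- a) < lamS * Rpower (lamS * X * R0 / Nf) (- a) <->
   X * Nm < eps_of a lamS * Nf * Y).
Proof.
  intros. unfold eps_of, Rpower.
  assert (L1 : ln (lamS * exp (- a * ln (lamS * X * R0 / Nf))) =
     ln lamS - a * (ln lamS + ln X + ln R0 - ln Nf)).
  { rewrite ln_mult, ln_exp by (auto; apply exp_pos). unfold Rdiv.
    rewrite !ln_mult, ln_Rinv; try lra; repeat apply Rmult_lt_0_compat; auto;
      apply Rinv_0_lt_compat; auto. }
  assert (L2 : ln (exp (- a * ln (Y * R0 / Nm))) = - a * (ln Y + ln R0 - ln Nm)).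
  { rewrite ln_exp. unfold Rdiv.
    rewrite !ln_mult, ln_Rinv; try lra; repeat apply Rmult_lt_0_compat; auto;
      apply Rinv_0_lt_compat; auto. }
  assert (L3 : ln (exp ((1 / a - 1) * ln lamS) * Nf * Y) = (1 / a - 1) * ln lamS + ln Nf + ln Y).
  { rewrite !ln_mult, ln_exp; auto; try apply Rmult_lt_0_compat; auto; apply exp_pos. }
  assert (L4 : ln (X * Nm) = ln X + ln Nm) by (apply ln_mult; auto).
  assert (P1 : 0 < lamS * exp (- a * ln (lamS * X * R0 / Nf))) by (apply Rmult_lt_0_compat; auto; apply exp_pos).
  assert (P2 := exp_pos (- a * ln (Y * R0 / Nm))).
  assert (P3 : 0 < exp ((1 / a - 1) * ln lamS) * Nf * Y) by (repeat apply Rmult_lt_0_compat; auto; apply exp_pos).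
  assert (P4 : 0 < X * Nm) by (apply Rmult_lt_0_compat; auto).
  split; apply ln_cmp with a; auto; rewrite L1, L2, L3, L4; field; lra.
Qed.
Lemma rev_eq a R0 lam B r : 0 <= B -> rev_term a R0 lam B r = R0 * lam * B * Rpower r (- a).
Proof. intros. unfold rev_term. destruct (Rle_dec B 0); [replace B with 0 by lra; ring|auto]. Qed.
Lemma S2_G a Nm Nf R0 lamS B1 B2 b1 x : 0 <= x <= B2 ->
  S2 a Nm Nf R0 lamS B1 B2 b1 x = G a R0 Nm Nf lamS B2 (B1 - b1 + B2) b1 x.
Proof.
  intros. unfold S2, payoff, G. rewrite !rev_eq by lra. unfold rate_M, rate_S.
  replace (B1 - b1 + (B2 - x)) with (B1 - b1 + B2 - x) by ring. ring.
Qed.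
Lemma S1_G a Nm Nf R0 lamS B1 B2 b2 x : 0 <= x <= B1 ->
  S1 a Nm Nf R0 lamS B1 B2 x b2 = G a R0 Nm Nf lamS B1 (B1 + B2 - b2) b2 x.
Proof.
  intros. unfold S1, payoff, G. rewrite !rev_eq by lra. unfold rate_M, rate_S.
  replace (B1 - x + (B2 - b2)) with (B1 + B2 - b2 - x) by ring.
  replace (x + b2) with (b2 + x) by ring. ring.
Qed.
Lemma Rpower_decr a u v : 0 < a -> 0 < u -> u <= v -> Rpower v (- a) <= Rpower u (- a).
Proof.
  intros. unfold Rpower. destruct (Rle_lt_or_eq_dec _ _ H1) as [h|h]; [|subst; lra].
  apply Rlt_le, exp_increasing. apply ln_increasing in h; auto. nra.
Qed.
Lemma conv_ge R0 q p a c k X Y : 0 < R0 -> 0 < X -> 0 < Y ->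
  R0 * (q * (1 - a * c / X) - p * (1 - a * k / Y)) >= 0 ->
  q * (X - a * c) * Y - p * (Y - a * k) * X >= 0.
Proof.
  intros. replace (q * (X - a * c) * Y - p * (Y - a * k) * X) with
    ((X * Y / R0) * (R0 * (q * (1 - a * c / X) - p * (1 - a * k / Y)))) by (field; lra).
  apply Rle_ge, Rmult_le_pos; [|lra]. apply Rmult_le_pos; [nra|]. left; apply Rinv_0_lt_compat; lra.
Qed.
Lemma conv_le R0 q p a c k X Y : 0 < R0 -> 0 < X -> 0 < Y ->
  R0 * (q * (1 - a * c / X) - p * (1 - a * k / Y)) <= 0 ->
  q * (X - a * c) * Y - p * (Y - a * k) * X <= 0.
Proof.
  intros. replace (q * (X - a * c) * Y - p * (Y - a * k) * X) with
    (- ((X * Y / R0) * (- (R0 * (q * (1 - a * c / X) - p * (1 - a * k / Y)))))) by (field; lra).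
  assert (0 <= (X * Y / R0) * (- (R0 * (q * (1 - a * c / X) - p * (1 - a * k / Y))))); [|lra].
  apply Rmult_le_pos; [|lra]. apply Rmult_le_pos; [nra|]. left; apply Rinv_0_lt_compat; lra.
Qed.

Theorem proposition2 (alpha Nm Nf R0 lamS B1 B2 B10 B20 b1 b2 : R) :
  0 < alpha < 1 -> 0 < Nm -> 0 < Nf -> 0 < R0 -> 1 < lamS ->
  0 < B1 -> 0 < B2 -> 0 <= B10 <= B1 -> 0 <= B20 <= B2 ->
  B10 <= B_free alpha Nm Nf lamS B1 ->
  B_free alpha Nm Nf lamS B2 < B20 ->
  is_NE alpha Nm Nf R0 lamS B1 B2 B10 B20 b1 b2 ->
  b2 = B20 /\ (b1 = B10 \/ B10 < b1).
Proof.
  intros Ha HNm HNf HR0 Hl HB1 HB2 H10 H20 Hf1 Hf2 [Hb1 [Hb2 [N1 N2]]].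
  split; [|destruct (Rle_lt_or_eq_dec _ _ (proj1 Hb1)); auto].
  destruct (Rle_lt_or_eq_dec _ _ (proj1 Hb2)) as [Hlt|Heq]; [exfalso|auto].
  assert (Hep : 0 < eps_of alpha lamS) by (unfold eps_of, Rpower; apply exp_pos).
  unfold B_free in Hf1, Hf2.
  set (E := eps_of alpha lamS * Nf) in *.
  assert (HE : 0 < E) by (unfold E; nra).
  assert (F1 : B10 * (E + Nm) <= E * B1).
  { apply (Rmult_le_compat_r (E + Nm)) in Hf1; [|lra].
    replace (E * B1 / (E + Nm) * (E + Nm)) with (E * B1) in Hf1 by (field; lra). lra. }
  assert (F2 : E * B2 < b2 * (E + Nm)).
  { apply (Rmult_lt_compat_r (E + Nm)) in Hf2; [|lra].
    replace (E * B2 / (E + Nm) * (E + Nm)) with (E * B2) in Hf2 by (field; lra). nra. }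
  assert (HYc : 0 < B1 - b1 + B2 - b2 \/ (b1 = B1 /\ b2 = B2)).
  { destruct (Rle_lt_or_eq_dec _ _ (proj2 Hb1)); destruct (Rle_lt_or_eq_dec _ _ (proj2 Hb2)); lra. }
  destruct HYc as [HY|[e1 e2]].
  - assert (HX : 0 < b1 + b2) by lra.
    pose proof (G_deriv alpha R0 Nm Nf lamS B2 (B1 - b1 + B2) b1 b2 HR0 HNm HNf ltac:(lra)
      ltac:(lra) HX) as D2.
    pose proof (G_deriv alpha R0 Nm Nf lamS B1 (B1 + B2 - b2) b2 b1 HR0 HNm HNf ltac:(lra)
      ltac:(lra) ltac:(lra)) as D1.
    rewrite (Rplus_comm b2 b1) in D1.
    replace (B1 + B2 - b2 - b1) with (B1 - b1 + B2 - b2) in D1 by ring.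
    replace (B1 - b1 + B2 - b2) with (B1 - b1 + B2 - b2) in D2 by ring.
    set (q := lamS * Rpower (lamS * (b1 + b2) * R0 / Nf) (- alpha)) in *.
    set (p := Rpower ((B1 - b1 + B2 - b2) * R0 / Nm) (- alpha)) in *.
    assert (Hq : 0 < q) by (unfold q, Rpower; pose proof (exp_pos (- alpha * ln (lamS * (b1 + b2) * R0 / Nf))); nra).
    assert (Hp : 0 < p) by (unfold p, Rpower; apply exp_pos).
    assert (G2 : R0 * (q * (1 - alpha * b2 / (b1 + b2)) - p * (1 - alpha * (B2 - b2) / (B1 - b1 + B2 - b2))) >= 0).
    { destruct (Rlt_or_le (R0 * (q * (1 - alpha * b2 / (b1 + b2)) - p * (1 - alpha * (B2 - b2) / (B1 - b1 + B2 - b2)))) 0) as [h|h]; [|lra].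
      destruct (deriv_neg_left _ _ _ B20 D2 h Hlt) as [x [Hx Hgt]].
      specialize (N2 x ltac:(lra)).
      rewrite !S2_G in N2 by lra. lra. }
    assert (G1a : b1 < B1 -> R0 * (q * (1 - alpha * b1 / (b1 + b2)) - p * (1 - alpha * (B1 - b1) / (B1 - b1 + B2 - b2))) <= 0).
    { intro hb. destruct (Rlt_or_le 0 (R0 * (q * (1 - alpha * b1 / (b1 + b2)) - p * (1 - alpha * (B1 - b1) / (B1 - b1 + B2 - b2))))) as [h|h]; [|lra].
      destruct (deriv_pos_right _ _ _ B1 D1 h hb) as [x [Hx Hgt]].
      specialize (N1 x ltac:(lra)).
      rewrite !S1_G in N1 by lra. lra. }
    assert (G1b : B10 < b1 -> R0 * (q * (1 - alpha * b1 / (b1 + b2)) - p * (1 - alpha * (B1 - b1) / (B1 - b1 + B2 - b2))) >= 0).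
    { intro hb. destruct (Rlt_or_le (R0 * (q * (1 - alpha * b1 / (b1 + b2)) - p * (1 - alpha * (B1 - b1) / (B1 - b1 + B2 - b2)))) 0) as [h|h]; [|lra].
      destruct (deriv_neg_left _ _ _ B10 D1 h hb) as [x [Hx Hgt]].
      specialize (N1 x ltac:(lra)).
      rewrite !S1_G in N1 by lra. lra. }
    destruct (cmp_prices alpha lamS R0 Nm Nf (b1 + b2) (B1 - b1 + B2 - b2) ltac:(lra) ltac:(lra)
      HR0 HNm HNf HX HY) as [C1 C2].
    fold q p E in C1, C2.
    apply (alg alpha q p (b1 + b2) (B1 - b1 + B2 - b2) b1 b2 B1 B2 E Nm B10); auto; try lra.
    + apply conv_ge with R0; auto.
    + intro h; apply conv_le with R0; auto.
    + intro h; apply conv_ge with R0; auto.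
  - subst b1 b2.
    set (P0 := Rpower (lamS * (B1 + B2) * R0 / Nf) (- alpha)).
    assert (HP0 : 0 < P0) by (unfold P0, Rpower; apply exp_pos).
    set (L := lamS * P0).
    assert (HL : 0 < L) by (unfold L; nra).
    set (u0 := exp (- ln L / alpha - 1)).
    assert (Hu0 : 0 < u0) by apply exp_pos.
    set (u := Rmin u0 ((B2 - B20) * R0 / Nm / 2)).
    assert (Hu : 0 < u).
    { apply Rmin_glb_lt; auto. apply Rdiv_lt_0_compat; [|lra]. apply Rdiv_lt_0_compat; [nra|lra]. }
    assert (Hu1 : u <= u0) by apply Rmin_l.
    assert (Hu2 : u <= (B2 - B20) * R0 / Nm / 2) by apply Rmin_r.
    set (t := u * Nm / R0).
    assert (Ht : 0 < t) by (unfold t; apply Rdiv_lt_0_compat; nra).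
    assert (Ht2 : t <= (B2 - B20) / 2).
    { unfold t. apply (Rmult_le_compat_r (Nm / R0)) in Hu2; [|left; apply Rdiv_lt_0_compat; lra].
      replace ((B2 - B20) * R0 / Nm / 2 * (Nm / R0)) with ((B2 - B20) / 2) in Hu2 by (field; lra).
      replace (u * Nm / R0) with (u * (Nm / R0)) by (field; lra). lra. }
    assert (Hpow : L < Rpower u (- alpha)).
    { unfold Rpower. rewrite <- (exp_ln L) by auto. apply exp_increasing.
      assert (ln u <= ln u0).
      { destruct (Rle_lt_or_eq_dec _ _ Hu1) as [h|h]; [left; apply ln_increasing; auto|rewrite h; lra]. }
      unfold u0 in H. rewrite ln_exp in H.
      assert (alpha * ln u <= alpha * (- ln L / alpha - 1)) by (apply Rmult_le_compat_l; lra).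
      replace (alpha * (- ln L / alpha - 1)) with (- ln L - alpha) in H0 by (field; lra).
      lra. }
    specialize (N2 (B2 - t) ltac:(lra)).
    rewrite !S2_G in N2 by lra. unfold G in N2.
    replace ((B1 - B1 + B2 - (B2 - t)) * R0 / Nm) with u in N2 by (unfold t; field; lra).
    replace (B2 - (B2 - t)) with t in N2 by ring.
    replace (B1 - B1 + B2 - B2) with 0 in N2 by ring.
    fold P0 in N2.
    assert (Hd : P0 <= Rpower (lamS * (B1 + (B2 - t)) * R0 / Nf) (- alpha)).
    { apply Rpower_decr; [lra| |].
      apply Rdiv_lt_0_compat; [|lra]. apply Rmult_lt_0_compat; [|lra]. apply Rmult_lt_0_compat; lra.
      apply Rmult_le_compat_r. left; apply Rinv_0_lt_compat; lra.
      apply Rmult_le_compat_r; [lra|]. apply Rmult_le_compat_l; lra. }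
    assert (K1 : R0 * lamS * (B2 - t) * P0 <= R0 * lamS * (B2 - t) * Rpower (lamS * (B1 + (B2 - t)) * R0 / Nf) (- alpha)).
    { apply Rmult_le_compat_l; auto. apply Rmult_le_pos; [|lra]. nra. }
    assert (K2 : 0 < R0 * t * (Rpower u (- alpha) - L)).
    { apply Rmult_lt_0_compat; [nra|lra]. }
    unfold L in K2. nra.
Qed.
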